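(* Let $G=(V,E)$ be a 3-connected, transient, simple proper planar graph with bounded vertex degree and locally finite dual that is circle packed in $\mathbb{H}^2$, and let $\mathcal{A}$ be a nonempty proper closed subset of $\partial\mathbb{H}^2$. The following are equivalent: (1) there is an open set $\mathcal{O}_{\mathcal A}\supseteq\mathcal A$ such that for every open set $U_{\mathcal A}$ with $\mathcal A\subseteq U_{\mathcal A}\subseteq\mathcal O_{\mathcal A}$, the graph $G\setminus U_{\mathcal A}$ is transient; (2) there is an open set $U_{\mathcal A}\supseteq\mathcal A$ such that $G\setminus U_{\mathcal A}$ is transient.
   Context: Vertices are identified with the Euclidean centers of the circles of a circle packing of the unit disk with tangency graph $G$; open sets are with respect to the topology induced by the path metric $d_m$ of $m(e)=r_u+r_v$ ($r_v$ the radius at $v$). $G\setminus U$ denotes the subgraph of $G$ obtained by deleting the vertices lying in $U$. A graph is transient if simple random walk on it (on each component considered) is transient. *)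

(* Defs.v *)
From Stdlib Require Import Reals Lra List ClassicalEpsilon.
Open Scope R_scope.
Set Implicit Arguments.

Definition pnorm (p : R * R) : R := sqrt (fst p * fst p + snd p * snd p).
Definition pdist (p q : R * R) : R := pnorm (fst p - fst q, snd p - snd q).
Definition psub (p q : R * R) : R * R := (fst p - fst q, snd p - snd q).
Definition cross (a b : R * R) : R := fst a * snd b - snd a * fst b.
Definition dot (a b : R * R) : R := fst a * fst b + snd a * snd b.
Definition on_circle (p : R * R) : Prop := fst p * fst p + snd p * snd p = 1.

(* x lies strictly inside the open counterclockwise angular sector going
   from direction a to direction b (a, b, x nonzero vectors). *)
Definition sector_open (a b x : R * R) : Prop :=
  (cross a b > 0 /\ cross a x > 0 /\ cross x b > 0) \/
  (cross a b < 0 /\ ~ (cross b x >= 0 /\ cross x a >= 0)) \/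
  (cross a b = 0 /\ dot a b < 0 /\ cross a x > 0) \/
  (cross a b = 0 /\ dot a b > 0 /\ ~ (cross a x = 0 /\ dot a x > 0)).

Definition Rltb (a b : R) : bool := if Rlt_dec a b then true else false.

(* even-odd rule: does the edge [p,q] cross the horizontal ray from z to the right *)
Definition crossb (z p q : R * R) : bool :=
  andb (xorb (Rltb (snd z) (snd p)) (Rltb (snd z) (snd q)))
       (Rltb (fst z) (fst p + (snd z - snd p) * (fst q - fst p) / (snd q - snd p))).

Definition graph_nb {V : Type} (adj : V -> V -> Prop) (nb : V -> list V) : Prop :=
  (forall u v, adj u v <-> In v (nb u)) /\ (forall u, NoDup (nb u)).

Definition simple_graph {V : Type} (adj : V -> V -> Prop) : Prop :=
  (forall u, ~ adj u u) /\ (forall u v, adj u v -> adj v u).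

Definition bounded_degree {V : Type} (nb : V -> list V) : Prop :=
  exists D : nat, forall v, (length (nb v) <= D)%nat.

Fixpoint walk_in {V : Type} (adj : V -> V -> Prop) (S : V -> Prop)
    (u : V) (l : list V) (v : V) : Prop :=
  match l with
  | nil => u = v
  | x :: l' => adj u x /\ S x /\ walk_in adj S x l' v
  end.

Definition connected_in {V : Type} (adj : V -> V -> Prop) (S : V -> Prop) : Prop :=
  forall u v, S u -> S v -> exists l, walk_in adj S u l v.

Definition three_connected {V : Type} (adj : V -> V -> Prop) : Prop :=
  connected_in adj (fun _ => True) /\
  (exists a b c d : V, NoDup (a :: b :: c :: d :: nil)) /\
  (forall a b : V, connected_in adj (fun v => v <> a /\ v <> b)).

Definition nb_in {V : Type} (nb : V -> list V) (S : V -> Prop) (v : V) : list V :=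
  filter (fun u => if excluded_middle_informative (S u) then true else false) (nb v).

Fixpoint sum_list (l : list R) : R :=
  match l with nil => 0 | x :: l' => x + sum_list l' end.

Fixpoint srw_p {V : Type} (nb : V -> list V) (S : V -> Prop) (n : nat) (v w : V) : R :=
  match n with
  | O => if excluded_middle_informative (v = w) then 1 else 0
  | S n' => sum_list (map (fun u => / INR (length (nb_in nb S v)) * srw_p nb S n' u w)
                          (nb_in nb S v))
  end.

(* SRW on G[S] started at v (a non-isolated vertex of G[S]) is transient:
   the expected number of visits to v, sum_n p_n(v,v), is finite *)
Definition transient_at {V : Type} (nb : V -> list V) (S : V -> Prop) (v : V) : Prop :=
  S v /\ (exists u, In u (nb v) /\ S u) /\
  exists M : R, forall N : nat, sum_f_R0 (fun n => srw_p nb S n v v) N <= M.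

(* the induced subgraph G[S] is transient: SRW on (some component of) it is transient *)
Definition transient_sub {V : Type} (nb : V -> list V) (S : V -> Prop) : Prop :=
  exists v, transient_at nb S v.

Definition packing {V : Type} (adj : V -> V -> Prop) (c : V -> R * R) (r : V -> R) : Prop :=
  (forall v, 0 < r v /\ pnorm (c v) + r v < 1) /\
  (forall u v, u <> v -> pdist (c u) (c v) >= r u + r v) /\
  (forall u v, adj u v <-> (u <> v /\ pdist (c u) (c v) = r u + r v)).

(* w is the next neighbour of v after u in counterclockwise order *)
Definition next_ccw {V : Type} (nb : V -> list V) (c : V -> R * R) (v u w : V) : Prop :=
  In u (nb v) /\ In w (nb v) /\ u <> w /\
  forall x, In x (nb v) ->
    ~ sector_open (psub (c u) (c v)) (psub (c w) (c v)) (psub (c x) (c v)).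

(* s is a face-boundary walk of the embedding induced by the packing *)
Definition face_seq {V : Type} (nb : V -> list V) (c : V -> R * R) (s : nat -> V) : Prop :=
  forall k, next_ccw nb c (s (S k)) (s k) (s (S (S k))).

Definition finite_face {V : Type} (nb : V -> list V) (c : V -> R * R)
    (s : nat -> V) (n : nat) : Prop :=
  face_seq nb c s /\ (0 < n)%nat /\ s n = s O /\ s (S n) = s (S O).

(* locally finite dual: every face is bounded by finitely many edges *)
Definition locally_finite_dual {V : Type} (adj : V -> V -> Prop) (nb : V -> list V)
    (c : V -> R * R) : Prop :=
  forall u v, adj u v -> exists s n, s O = u /\ s (S O) = v /\ finite_face nb c s n.

(* z lies in the interior of the polygon of centres of a (finite) face *)
Definition in_face_polygon {V : Type} (nb : V -> list V) (c : V -> R * R) (z : R * R) : Prop :=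
  exists s n, finite_face nb c s n /\
    Nat.odd (length (filter (fun k => crossb z (c (s k)) (c (s (S k)))) (seq 0 n))) = true.

(* the carrier (closed disks + interstices) is the whole open unit disk *)
Definition packed_in_H2 {V : Type} (adj : V -> V -> Prop) (nb : V -> list V)
    (c : V -> R * R) (r : V -> R) : Prop :=
  packing adj c r /\
  forall z, pnorm z < 1 -> (exists v, pdist z (c v) <= r v) \/ in_face_polygon nb c z.

(* ---------- the space V ∪ ∂H^2 with the path metric d_m, m(e) = r_u + r_v ---------- *)
Inductive point (V : Type) : Type :=
  | Vtx : V -> point V
  | Bdy : {p : R * R | on_circle p} -> point V.
Arguments Vtx {V} _.
Arguments Bdy {V} _.

Fixpoint walk_len {V : Type} (r : V -> R) (u : V) (l : list V) : R :=
  match l with nil => 0 | x :: l' => r u + r x + walk_len r x l' end.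

(* d_m(u,v) < eps *)
Definition vv_lt {V : Type} (adj : V -> V -> Prop) (r : V -> R) (u v : V) (eps : R) : Prop :=
  exists l, walk_in adj (fun _ => True) u l v /\ walk_len r u l < eps.

Definition ray_lt {V : Type} (adj : V -> V -> Prop) (c : V -> R * R) (r : V -> R)
    (v : V) (p : R * R) (eps : R) : Prop :=
  exists s : nat -> V, s O = v /\ (forall k, adj (s k) (s (S k))) /\
    (exists L, L < eps /\ forall N, sum_f_R0 (fun k => r (s k) + r (s (S k))) N <= L) /\
    Un_cv (fun k => fst (c (s k))) (fst p) /\ Un_cv (fun k => snd (c (s k))) (snd p).

(* d_m(x,y) < eps on V ∪ ∂H^2 *)
Definition dm_lt {V : Type} (adj : V -> V -> Prop) (c : V -> R * R) (r : V -> R)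
    (x y : point V) (eps : R) : Prop :=
  match x, y with
  | Vtx u, Vtx v => vv_lt adj r u v eps
  | Vtx u, Bdy q => ray_lt adj c r u (proj1_sig q) eps
  | Bdy p, Vtx v => ray_lt adj c r v (proj1_sig p) eps
  | Bdy p, Bdy q => proj1_sig p = proj1_sig q \/
      exists v a b, a + b < eps /\ ray_lt adj c r v (proj1_sig p) a /\
                    ray_lt adj c r v (proj1_sig q) b
  end.

Definition dm_open {V : Type} (adj : V -> V -> Prop) (c : V -> R * R) (r : V -> R)
    (U : point V -> Prop) : Prop :=
  forall x, U x -> exists eps, 0 < eps /\ forall y, dm_lt adj c r x y eps -> U y.

Definition bdy_sub {V : Type} (A : R * R -> Prop) (U : point V -> Prop) : Prop :=
  forall q : {p : R * R | on_circle p}, A (proj1_sig q) -> U (Bdy q).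

Definition minus_set {V : Type} (U : point V -> Prop) : V -> Prop := fun v => ~ U (Vtx v).

Definition closed_proper_bdy (A : R * R -> Prop) : Prop :=
  (forall p, A p -> on_circle p) /\ (exists p, A p) /\ (exists p, on_circle p /\ ~ A p) /\
  (forall p, on_circle p -> ~ A p ->
     exists eps, 0 < eps /\ forall q, on_circle q -> pdist p q < eps -> ~ A q).

(* Main.v *)
Require Import Defs.
From Stdlib Require Import Reals List Lra Lia ClassicalEpsilon.
Open Scope R_scope.

Definition sumL {A : Type} (l : list A) (f : A -> R) : R := sum_list (map f l).

Lemma sumL_nil {A} (f : A -> R) : sumL nil f = 0.
Proof. reflexivity. Qed.
Lemma sumL_cons {A} (a : A) l f : sumL (a :: l) f = f a + sumL l f.
Proof. reflexivity. Qed.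

Lemma sumL_plus {A} (l : list A) f g : sumL l (fun x => f x + g x) = sumL l f + sumL l g.
Proof. induction l; unfold sumL in *; simpl; [lra|]. rewrite IHl; lra. Qed.

Lemma sumL_scal {A} (l : list A) c f : sumL l (fun x => c * f x) = c * sumL l f.
Proof. induction l; unfold sumL in *; simpl; [lra|]. rewrite IHl; lra. Qed.

Lemma sumL_minus {A} (l : list A) f g : sumL l (fun x => f x - g x) = sumL l f - sumL l g.
Proof. induction l; unfold sumL in *; simpl; [lra|]. rewrite IHl; lra. Qed.

Lemma sumL_const {A} (l : list A) c : sumL l (fun _ => c) = INR (length l) * c.
Proof. induction l; unfold sumL in *; [simpl; lra|]. cbn [map sum_list length]. rewrite IHl, S_INR; lra. Qed.

Lemma sumL_ext {A} (l : list A) f g : (forall x, In x l -> f x = g x) -> sumL l f = sumL l g.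
Proof. induction l; intros H; unfold sumL in *; simpl; auto.
  rewrite (H a (or_introl eq_refl)), IHl; auto. intros; apply H; simpl; auto. Qed.

Lemma sumL_le {A} (l : list A) f g : (forall x, In x l -> f x <= g x) -> sumL l f <= sumL l g.
Proof. induction l; intros H; unfold sumL in *; simpl; [lra|].
  assert (f a <= g a) by (apply H; simpl; auto).
  assert (sum_list (map f l) <= sum_list (map g l)) by (apply IHl; intros; apply H; simpl; auto). lra. Qed.

Lemma sumL_nonneg {A} (l : list A) f : (forall x, In x l -> 0 <= f x) -> 0 <= sumL l f.
Proof. intros H. replace 0 with (sumL l (fun _ => 0)). apply sumL_le; auto.
  rewrite sumL_const; lra. Qed.

Lemma sumL_zero {A} (l : list A) f : (forall x, In x l -> f x = 0) -> sumL l f = 0.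
Proof. intros H. rewrite (sumL_ext l f (fun _ => 0)); auto. rewrite sumL_const; lra. Qed.

Lemma sumL_member_le {A} (l : list A) f x : (forall y, In y l -> 0 <= f y) -> In x l -> f x <= sumL l f.
Proof. induction l; intros H Hx; simpl in Hx; [contradiction|]. rewrite sumL_cons.
  destruct Hx as [<-|Hx].
  - assert (0 <= sumL l f) by (apply sumL_nonneg; intros; apply H; simpl; auto). lra.
  - assert (0 <= f a) by (apply H; simpl; auto).
    assert (f x <= sumL l f) by (apply IHl; auto; intros; apply H; simpl; auto). lra. Qed.

Lemma sumL_swap {A B} (l : list A) (m : list B) F :
  sumL l (fun x => sumL m (fun y => F x y)) = sumL m (fun y => sumL l (fun x => F x y)).
Proof. induction l.
  - rewrite sumL_nil. symmetry. apply sumL_zero. intros; reflexivity.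
  - rewrite sumL_cons, IHl, <- sumL_plus. apply sumL_ext. intros; rewrite sumL_cons; reflexivity. Qed.

Lemma sumL_exists_pos {A} (l : list A) f : 0 < sumL l f -> exists x, In x l /\ 0 < f x.
Proof. intros H. destruct (classic (exists x, In x l /\ 0 < f x)) as [|Hn]; auto.
  exfalso. assert (sumL l f <= sumL l (fun _ => 0)).
  { apply sumL_le. intros x Hx. destruct (Rle_dec (f x) 0); auto. exfalso; apply Hn; exists x; split; auto; lra. }
  rewrite sumL_const in H0; lra. Qed.

Lemma sumL_exists_nz {A} (l : list A) f : sumL l f <> 0 -> exists x, In x l /\ f x <> 0.
Proof. intros H. destruct (classic (exists x, In x l /\ f x <> 0)) as [|Hn]; auto.
  exfalso. apply H. apply sumL_zero. intros x Hx. destruct (Req_dec (f x) 0); auto.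
  exfalso; apply Hn; eauto. Qed.

Definition ind {A} (P : A -> Prop) (h : A -> R) (y : A) : R :=
  if excluded_middle_informative (P y) then h y else 0.

Lemma sumL_single {A} (L : list A) a h : NoDup L -> In a L ->
  sumL L (ind (fun y => y = a) h) = h a.
Proof. induction L; intros Hnd Hin; simpl in Hin; [contradiction|]. inversion Hnd; subst.
  rewrite sumL_cons. unfold ind at 1. destruct (excluded_middle_informative (a0 = a)) as [->|Hne].
  - rewrite sumL_zero; [lra|]. intros x Hx; unfold ind.
    destruct (excluded_middle_informative (x = a)); subst; [contradiction|auto].
  - destruct Hin as [->|Hin]; [congruence|]. rewrite IHL; auto; lra. Qed.

Lemma sumL_sub {A} (l L : list A) h : NoDup l -> NoDup L -> incl l L ->
  sumL l h = sumL L (ind (fun y => In y l) h).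
Proof. induction l; intros Hl HL Hi.
  - symmetry; apply sumL_zero. intros; unfold ind. destruct excluded_middle_informative; [contradiction|auto].
  - inversion Hl; subst. rewrite sumL_cons, IHl; auto; [|intros z Hz; apply Hi; simpl; auto].
    rewrite <- (sumL_single L a h) by (auto; apply Hi; simpl; auto).
    rewrite <- sumL_plus. apply sumL_ext. intros x _. unfold ind.
    destruct (excluded_middle_informative (x = a)) as [Hxa|Hxa];
    destruct (excluded_middle_informative (In x l));
    destruct (excluded_middle_informative (In x (a :: l))); simpl in *; subst; try tauto; try lra.
    all: exfalso; intuition congruence. Qed.

Lemma sumL_incl_le {A} (l L : list A) h : NoDup l -> NoDup L -> incl l L ->
  (forall x, 0 <= h x) -> sumL l h <= sumL L h.
Proof. intros. rewrite (sumL_sub l L) by auto. apply sumL_le. intros; unfold ind.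
  destruct excluded_middle_informative; [lra|auto]. Qed.

Lemma sum_f_sumL {A} (L : list A) F T :
  sum_f_R0 (fun K => sumL L (F K)) T = sumL L (fun x => sum_f_R0 (fun K => F K x) T).
Proof. induction T; simpl. reflexivity. rewrite IHT, <- sumL_plus. reflexivity. Qed.

Lemma sumL_sum_f {A} (L : list A) F T :
  sumL L (fun x => sum_f_R0 (fun K => F K x) T) = sum_f_R0 (fun K => sumL L (F K)) T.
Proof. symmetry; apply sum_f_sumL. Qed.

Lemma inv_INR_nonneg n : 0 <= / INR n.
Proof. destruct n. simpl; rewrite Rinv_0; lra. apply Rlt_le, Rinv_0_lt_compat, lt_0_INR; lia. Qed.

Definition dg {V} (nb : V -> list V) (X : V -> Prop) (x : V) : R := INR (length (nb_in nb X x)).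

Lemma p_succ {V} (nb : V -> list V) X n x w :
  srw_p nb X (S n) x w = / dg nb X x * sumL (nb_in nb X x) (fun u => srw_p nb X n u w).
Proof. simpl. rewrite <- sumL_scal. reflexivity. Qed.

Lemma p_nonneg {V} (nb : V -> list V) X n : forall x w, 0 <= srw_p nb X n x w.
Proof. induction n; intros x w.
  - simpl. destruct excluded_middle_informative; lra.
  - rewrite p_succ. apply Rmult_le_pos. apply inv_INR_nonneg. apply sumL_nonneg; auto. Qed.

Lemma sum_nb_p {V} (nb : V -> list V) X n x w :
  sumL (nb_in nb X x) (fun u => srw_p nb X n u w) = dg nb X x * srw_p nb X (S n) x w.
Proof. rewrite p_succ. unfold dg. destruct (nb_in nb X x) eqn:E.
  - simpl. rewrite sumL_nil. lra.
  - field. apply not_0_INR. simpl; lia. Qed.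

Lemma CK {V} (nb : V -> list V) X a : forall b w x y,
  srw_p nb X a w y * srw_p nb X b y x <= srw_p nb X (a + b) w x.
Proof. induction a; intros b w x y.
  - simpl. destruct excluded_middle_informative; subst. lra. rewrite Rmult_0_l. apply p_nonneg.
  - change (S a + b)%nat with (S (a + b)).
    rewrite (p_succ nb X a), (p_succ nb X (a + b)%nat). rewrite Rmult_assoc.
    apply Rmult_le_compat_l. apply inv_INR_nonneg.
    rewrite Rmult_comm, <- sumL_scal. apply sumL_le. intros u _. rewrite Rmult_comm. apply IHa. Qed.

Lemma p1_ge {V} (nb : V -> list V) X y x : In x (nb_in nb X y) -> / dg nb X y <= srw_p nb X 1 y x.
Proof. intros H. rewrite p_succ. rewrite <- sumL_scal.
  apply Rle_trans with (/ dg nb X y * srw_p nb X 0 x x).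
  - simpl. destruct excluded_middle_informative; [lra|congruence].
  - apply (sumL_member_le _ (fun u => / dg nb X y * srw_p nb X 0 u x)); auto.
    intros; apply Rmult_le_pos; [apply inv_INR_nonneg|apply p_nonneg]. Qed.

Lemma in_nb_in {V} (adj : V -> V -> Prop) nb X x y : graph_nb adj nb ->
  (In y (nb_in nb X x) <-> adj x y /\ X y).
Proof. intros [Ha _]. unfold nb_in. rewrite filter_In, <- Ha.
  destruct excluded_middle_informative; intuition congruence. Qed.

Lemma sym_pos {V} (adj : V -> V -> Prop) nb X : graph_nb adj nb -> simple_graph adj ->
  forall n x w, X x -> 0 < srw_p nb X n x w -> 0 < srw_p nb X n w x.
Proof. intros Hg Hs n. induction n; intros x w Hx Hp.
  - simpl in *. destruct excluded_middle_informative; subst; [|lra].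
    destruct excluded_middle_informative; [lra|congruence].
  - rewrite p_succ, <- sumL_scal in Hp. apply sumL_exists_pos in Hp as [y [Hy Hpy]].
    assert (0 < srw_p nb X n y w).
    { destruct (p_nonneg nb X n y w) as [|E]; auto. rewrite <- E in Hpy; lra. }
    pose proof Hy as Hy'. apply (in_nb_in adj) in Hy' as [Hxy HXy]; auto.
    assert (Hyx : In x (nb_in nb X y)) by (apply (in_nb_in adj); auto; split; auto; apply Hs; auto).
    assert (0 < dg nb X y). { unfold dg. destruct (nb_in nb X y); [contradiction|]. apply lt_0_INR; simpl; lia. }
    pose proof (p1_ge nb X y x Hyx). pose proof (CK nb X n 1 w x y).
    replace (n + 1)%nat with (S n) in H2 by lia.
    assert (0 < srw_p nb X n w y) by (apply IHn; auto).
    assert (0 < / dg nb X y) by (apply Rinv_0_lt_compat; auto).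
    assert (0 < srw_p nb X n w y * srw_p nb X 1 y x) by (apply Rmult_lt_0_compat; lra). lra. Qed.

Fixpoint ball {V} (nb : V -> list V) (v : V) (n : nat) : list V :=
  match n with O => v :: nil | S m => ball nb v m ++ flat_map nb (ball nb v m) end.

Lemma ball_mono {V} (nb : V -> list V) v n m x : In x (ball nb v n) -> In x (ball nb v (n + m)).
Proof. induction m; intros H. rewrite Nat.add_0_r; auto.
  replace (n + S m)%nat with (S (n + m)) by lia. simpl. apply in_or_app; left; auto. Qed.

Lemma ball_le {V} (nb : V -> list V) v n m x : (n <= m)%nat -> In x (ball nb v n) -> In x (ball nb v m).
Proof. intros Hle H. replace m with (n + (m - n))%nat by lia. apply ball_mono; auto. Qed.

Lemma ball_nb {V} (nb : V -> list V) v n x y : In x (ball nb v n) -> In y (nb x) -> In y (ball nb v (S n)).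
Proof. intros. simpl. apply in_or_app; right. apply in_flat_map; eauto. Qed.

Lemma supp_p {V} (adj : V -> V -> Prop) nb X v : graph_nb adj nb -> simple_graph adj ->
  forall n x, srw_p nb X n x v <> 0 -> In x (ball nb v n).
Proof. intros Hg Hs n. induction n; intros x H.
  - simpl in *. destruct excluded_middle_informative; subst; auto; exfalso; lra.
  - rewrite p_succ, <- sumL_scal in H. apply sumL_exists_nz in H as [y [Hy Hpy]].
    assert (srw_p nb X n y v <> 0) by (intro E; rewrite E in Hpy; apply Hpy; try ring).
    apply (in_nb_in adj) in Hy as [Hxy _]; auto.
    apply ball_nb with y; auto. apply Hg. apply Hs; auto. Qed.

Definition gK {V} (nb : V -> list V) X v K x := sum_f_R0 (fun n => srw_p nb X n x v) K.
Definition aS {V} (adj : V -> V -> Prop) (X : V -> Prop) x y : R :=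
  if excluded_middle_informative (X x /\ X y /\ adj x y) then 1 else 0.
Definition Dform {V} adj (X : V -> Prop) L (f g : V -> R) :=
  sumL L (fun x => sumL L (fun y => aS adj X x y * ((f x - f y) * (g x - g y)))).

Lemma gK_nonneg {V} (nb : V -> list V) X v K x : 0 <= gK nb X v K x.
Proof. unfold gK. induction K; cbn [sum_f_R0]. apply (p_nonneg nb X 0). pose proof (p_nonneg nb X (S K) x v). lra. Qed.

Lemma row_gK {V} (nb : V -> list V) X v K x :
  sumL (nb_in nb X x) (fun y => gK nb X v K x - gK nb X v K y) =
  dg nb X x * (srw_p nb X 0 x v - srw_p nb X (S K) x v).
Proof. rewrite sumL_minus, sumL_const. unfold gK at 2. rewrite sumL_sum_f.
  rewrite (sum_eq _ (fun n => srw_p nb X (S n) x v * dg nb X x)) by (intros; rewrite sum_nb_p; ring).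
  rewrite <- (scal_sum (fun n => srw_p nb X (S n) x v) K (dg nb X x)).
  assert (E : sum_f_R0 (fun n => srw_p nb X n x v) (S K) =
     srw_p nb X 0 x v + sum_f_R0 (fun i => srw_p nb X (S i) x v) K).
  { rewrite decomp_sum by lia. reflexivity. }
  unfold gK. cbn [sum_f_R0] in E.
  assert (E2 : sum_f_R0 (fun i => srw_p nb X (S i) x v) K = sum_f_R0 (fun n => srw_p nb X n x v) K + srw_p nb X (S K) x v - srw_p nb X 0 x v) by lra.
  rewrite E2. unfold dg. ring. Qed.

Lemma aS_sym {V} (adj : V -> V -> Prop) X x y : simple_graph adj -> aS adj X x y = aS adj X y x.
Proof. intros [_ Hs]. unfold aS. do 2 destruct excluded_middle_informative; auto;
  exfalso; intuition. Qed.

Lemma aS_nonneg {V} (adj : V -> V -> Prop) X x y : 0 <= aS adj X x y.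
Proof. unfold aS; destruct excluded_middle_informative; lra. Qed.

Lemma green_sym {V} (adj : V -> V -> Prop) X L f g : simple_graph adj ->
  Dform adj X L f g = 2 * sumL L (fun x => f x * sumL L (fun y => aS adj X x y * (g x - g y))).
Proof. intros Hs. unfold Dform.
  transitivity (sumL L (fun x => sumL L (fun y => f x * (aS adj X x y * (g x - g y))))
              - sumL L (fun x => sumL L (fun y => f y * (aS adj X x y * (g x - g y))))).
  { rewrite <- sumL_minus. apply sumL_ext; intros. rewrite <- sumL_minus. apply sumL_ext; intros. ring. }
  rewrite (sumL_swap L L (fun x y => f y * (aS adj X x y * (g x - g y)))).
  assert (E : sumL L (fun y => sumL L (fun x => f y * (aS adj X x y * (g x - g y)))) =
     -1 * sumL L (fun x => sumL L (fun y => f x * (aS adj X x y * (g x - g y))))).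
  { rewrite <- sumL_scal. apply sumL_ext; intros. rewrite <- sumL_scal. apply sumL_ext; intros.
    rewrite (aS_sym adj X) by auto. ring. }
  rewrite E.
  assert (E2 : sumL L (fun x => sumL L (fun y => f x * (aS adj X x y * (g x - g y)))) =
     sumL L (fun x => f x * sumL L (fun y => aS adj X x y * (g x - g y)))).
  { apply sumL_ext; intros. apply sumL_scal. }
  rewrite E2. unfold dg. ring. Qed.

Lemma sum_aS_nb {V} (adj : V -> V -> Prop) nb X L x h : graph_nb adj nb -> X x -> NoDup L ->
  incl (nb_in nb X x) L -> sumL L (fun y => aS adj X x y * h y) = sumL (nb_in nb X x) h.
Proof. intros Hg Hx HL Hi.
  assert (Hnd : NoDup (nb_in nb X x)) by (apply NoDup_filter, Hg).
  rewrite (sumL_sub _ L h Hnd HL Hi).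
  apply sumL_ext. intros y _. unfold ind, aS.
  pose proof (in_nb_in adj nb X x y Hg).
  do 2 destruct excluded_middle_informative; try ring; exfalso; intuition. Qed.

Lemma green_row {V} (adj : V -> V -> Prop) nb X v K L f : graph_nb adj nb -> NoDup L ->
  (forall x, X x -> f x <> 0 -> incl (nb_in nb X x) L) ->
  sumL L (fun x => f x * sumL L (fun y => aS adj X x y * (gK nb X v K x - gK nb X v K y))) =
  sumL L (ind X (fun x => f x * (dg nb X x * (srw_p nb X 0 x v - srw_p nb X (S K) x v)))).
Proof. intros Hg HL Hsupp. apply sumL_ext. intros x _. unfold ind.
  destruct excluded_middle_informative as [Hx|Hx].
  - destruct (Req_dec (f x) 0) as [E|E]. rewrite E; ring.
    rewrite (sum_aS_nb adj nb X L x (fun y => gK nb X v K x - gK nb X v K y)); auto.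
    rewrite row_gK. reflexivity.
  - rewrite sumL_zero. ring. intros y _. unfold aS. destruct excluded_middle_informative; [tauto|ring]. Qed.

Lemma ind_sum_bound {V} nb (X : V -> Prop) v K L f : NoDup L -> In v L -> X v -> (forall x, 0 <= f x) ->
  sumL L (ind X (fun x => f x * (dg nb X x * (srw_p nb X 0 x v - srw_p nb X (S K) x v))))
  = f v * dg nb X v - sumL L (ind X (fun x => f x * dg nb X x * srw_p nb X (S K) x v)).
Proof. intros HL Hv HXv Hf. rewrite <- (sumL_single L v (fun x => f x * dg nb X x)) by auto.
  rewrite <- sumL_minus. apply sumL_ext. intros x _. unfold ind. simpl.
  repeat destruct excluded_middle_informative; subst; try tauto; try ring; congruence. Qed.

Lemma ind_err_nonneg {V} nb (X : V -> Prop) v K L f : (forall x, 0 <= f x) ->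
  0 <= sumL L (ind X (fun x => f x * dg nb X x * srw_p nb X (S K) x v)).
Proof. intros Hf. apply sumL_nonneg. intros x _. unfold ind. destruct excluded_middle_informative; [|lra].
  apply Rmult_le_pos; [apply Rmult_le_pos|apply p_nonneg]; auto. unfold dg; apply pos_INR. Qed.

Lemma D_le_X {V} (adj : V -> V -> Prop) X X' L f : (forall x, X x -> X' x) ->
  Dform adj X L f f <= Dform adj X' L f f.
Proof. intros H. apply sumL_le; intros; apply sumL_le; intros. apply Rmult_le_compat_r.
  apply Rle_0_sqr. unfold aS. do 2 destruct excluded_middle_informative; try lra. exfalso; intuition. Qed.

Lemma D_incl {V} (adj : V -> V -> Prop) X L L' f : NoDup L -> NoDup L' -> incl L L' ->
  Dform adj X L f f <= Dform adj X L' f f.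
Proof. intros. unfold Dform. apply Rle_trans with (sumL L (fun x => sumL L' (fun y => aS adj X x y * ((f x - f y) * (f x - f y))))).
  - apply sumL_le; intros. apply sumL_incl_le; auto. intros; apply Rmult_le_pos; [apply aS_nonneg|apply Rle_0_sqr].
  - apply sumL_incl_le; auto. intros; apply sumL_nonneg; intros; apply Rmult_le_pos; [apply aS_nonneg|apply Rle_0_sqr]. Qed.

Lemma D_amgm {V} (adj : V -> V -> Prop) X L f g lam : 0 < lam ->
  Dform adj X L f g <= lam / 2 * Dform adj X L f f + / (2 * lam) * Dform adj X L g g.
Proof. intros Hl. unfold Dform. rewrite <- !sumL_scal, <- sumL_plus. apply sumL_le; intros.
  rewrite <- !sumL_scal, <- sumL_plus. apply sumL_le; intros.
  set (a := aS adj X x x0). set (u := f x - f x0). set (w := g x - g x0).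
  assert (0 <= a) by apply aS_nonneg.
  assert (0 <= (lam * u - w) * (lam * u - w) / (2 * lam)).
  { apply Rmult_le_pos. apply Rle_0_sqr. apply Rlt_le, Rinv_0_lt_compat; lra. }
  assert (E : lam / 2 * (a * (u * u)) + / (2 * lam) * (a * (w * w)) - a * (u * w)
     = a * ((lam * u - w) * (lam * u - w) / (2 * lam))) by (field; lra).
  assert (0 <= a * ((lam * u - w) * (lam * u - w) / (2 * lam))) by (apply Rmult_le_pos; auto). lra. Qed.

Definition decV {V} (a b : V) : {a = b} + {a <> b} := excluded_middle_informative (a = b).

Lemma supp_gK {V} (adj : V -> V -> Prop) nb X v : graph_nb adj nb -> simple_graph adj ->
  forall K x, gK nb X v K x <> 0 -> In x (ball nb v K).
Proof. intros Hg Hs K. induction K; intros x H; unfold gK in *; cbn [sum_f_R0] in *.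
  - apply (supp_p adj nb X v Hg Hs 0); auto.
  - destruct (Req_dec (sum_f_R0 (fun n => srw_p nb X n x v) K) 0) as [E|E].
    + rewrite E in H. apply (supp_p adj nb X v Hg Hs (S K)). lra.
    + apply (ball_le nb v K (S K)); [lia|]. apply IHK; auto. Qed.

Lemma supp_incl {V} (adj : V -> V -> Prop) nb X v K R x : graph_nb adj nb -> simple_graph adj ->
  (K <= R)%nat -> gK nb X v K x <> 0 -> incl (nb_in nb X x) (nodup decV (ball nb v (S R))).
Proof. intros Hg Hs Hle H y Hy. apply nodup_In.
  apply (in_nb_in adj) in Hy as [Hxy _]; auto.
  apply ball_nb with x. apply ball_le with K; auto. apply (supp_gK adj nb X v Hg Hs K x H).
  apply Hg; auto. Qed.

Lemma subsum (a : nat -> R) k T : (forall n, 0 <= a n) ->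
  sum_f_R0 (fun K => a (S (k + K))) T <= sum_f_R0 a (S (k + T)).
Proof. intros Ha. induction T.
  - cbn [sum_f_R0]. rewrite Nat.add_0_r. cbn [sum_f_R0]. assert (0 <= sum_f_R0 a k) by (apply cond_pos_sum; auto). lra.
  - cbn [sum_f_R0]. rewrite Nat.add_succ_r. cbn [sum_f_R0] in *. pose proof (Ha (S (k + T))). lra. Qed.

Lemma Bx {V} (adj : V -> V -> Prop) nb X v x M : graph_nb adj nb -> simple_graph adj -> X x ->
  (forall N, sum_f_R0 (fun n => srw_p nb X n v v) N <= M) ->
  exists B, forall T, sum_f_R0 (fun K => srw_p nb X (S K) x v) T <= B.
Proof. intros Hg Hs Hx HM.
  destruct (classic (exists k, 0 < srw_p nb X k v x)) as [[k Hk]|Hn].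
  - exists (M / srw_p nb X k v x). intros T.
    apply Rle_trans with (sum_f_R0 (fun K => srw_p nb X (S (k + K)) v v / srw_p nb X k v x) T).
    + apply sum_Rle. intros K _. apply Rmult_le_reg_l with (srw_p nb X k v x); auto.
      pose proof (CK nb X k (S K) v v x). rewrite Nat.add_succ_r in H. field_simplify; lra.
    + unfold Rdiv. rewrite <- (scal_sum (fun K => srw_p nb X (S (k + K)) v v) T (/ srw_p nb X k v x)).
      rewrite (Rmult_comm M). apply Rmult_le_compat_l.
      apply Rlt_le, Rinv_0_lt_compat; auto.
      eapply Rle_trans. apply (subsum (fun n => srw_p nb X n v v)). intros; apply p_nonneg. apply HM.
  - exists 0. intros T. apply Req_le.
    replace 0 with (sum_f_R0 (fun _ => 0) T). apply sum_eq. intros K _.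
    destruct (p_nonneg nb X (S K) x v) as [Hp|Hp]; auto.
    exfalso. apply Hn. exists (S K). apply (sym_pos adj nb X Hg Hs); auto.
    clear. induction T; cbn [sum_f_R0]; lra. Qed.

Lemma list_bound {A} (L : list A) (F : nat -> A -> R) :
  (forall x, In x L -> exists B, forall T, F T x <= B) -> exists C, forall T, sumL L (F T) <= C.
Proof. induction L; intros H.
  - exists 0. intros; rewrite sumL_nil; lra.
  - destruct (H a (or_introl eq_refl)) as [B HB]. destruct IHL as [C HC]. intros; apply H; simpl; auto.
    exists (B + C). intros T. rewrite sumL_cons. specialize (HB T). specialize (HC T). lra. Qed.

Lemma sum_scal_l (a : nat -> R) c T : sum_f_R0 (fun K => c * a K) T = c * sum_f_R0 a T.
Proof. induction T; cbn [sum_f_R0]; [ring|]. rewrite IHT; ring. Qed.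

Lemma dg_pos {V} (adj : V -> V -> Prop) nb X v u : graph_nb adj nb -> In u (nb v) -> X u -> 0 < dg nb X v.
Proof. intros Hg Hu HX. assert (In u (nb_in nb X v)).
  { unfold nb_in. apply filter_In. split; auto. destruct excluded_middle_informative; tauto. }
  unfold dg. destruct (nb_in nb X v); [contradiction|]. apply lt_0_INR; simpl; lia. Qed.

Lemma mono_at {V} (adj : V -> V -> Prop) nb X X' v : graph_nb adj nb -> simple_graph adj ->
  (forall x, X x -> X' x) -> transient_at nb X v -> transient_at nb X' v.
Proof. intros Hg Hs Hsub [HXv [[u [Hu HXu]] [M HM]]].
  pose proof (dg_pos adj nb X v u Hg Hu HXu) as Hd.
  pose proof (dg_pos adj nb X' v u Hg Hu (Hsub u HXu)) as Hd'.
  set (d := dg nb X v) in *. set (d' := dg nb X' v) in *.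
  split; [auto|]. split; [exists u; auto|].
  exists (d' * M / d). intros N.
  set (g' := gK nb X' v N). set (G := g' v).
  change (sum_f_R0 (fun n => srw_p nb X' n v v) N) with G.
  set (L := nodup decV (ball nb v (S N))).
  assert (HL : NoDup L) by apply NoDup_nodup.
  assert (HvL : In v L). { apply nodup_In. apply (ball_le nb v 0); [lia|]. simpl; auto. }
  assert (Hg'pos : forall x, 0 <= g' x) by (intros; apply gK_nonneg).
  set (err := fun K => sumL L (ind X (fun x => g' x * dg nb X x * srw_p nb X (S K) x v))).
  assert (Hc : forall K, d * G / 2 - d' * M / 2 <= err K).
  { intros K.
    assert (Ea : Dform adj X L g' (gK nb X v K) = 2 * (G * d - err K)).
    { rewrite green_sym by auto. rewrite (green_row adj nb X v K L g' Hg HL).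
      rewrite (ind_sum_bound nb X v K L g' HL HvL HXv Hg'pos). reflexivity.
      intros x Hx Hnz y Hy. apply (supp_incl adj nb X' v N N x Hg Hs); auto.
      apply (in_nb_in adj) in Hy as [Hy1 Hy2]; auto. apply (in_nb_in adj); auto. }
    assert (Eb : Dform adj X L g' g' <= 2 * (G * d')).
    { eapply Rle_trans. apply (D_le_X adj X X' L g' Hsub).
      rewrite green_sym by auto. unfold g'. rewrite (green_row adj nb X' v N L (gK nb X' v N) Hg HL).
      rewrite (ind_sum_bound nb X' v N L (gK nb X' v N) HL HvL (Hsub v HXv) Hg'pos).
      pose proof (ind_err_nonneg nb X' v N L (gK nb X' v N) Hg'pos). change (gK nb X' v N v) with G. fold d'. lra.
      intros x Hx Hnz. apply (supp_incl adj nb X' v N N x Hg Hs); auto. }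
    set (L' := nodup decV (ball nb v (S (N + K)))).
    assert (Ec : Dform adj X L (gK nb X v K) (gK nb X v K) <= 2 * (M * d)).
    { eapply Rle_trans. apply (D_incl adj X L L'). auto. apply NoDup_nodup.
      intros y Hy. apply nodup_In. apply nodup_In in Hy. apply ball_le with (S N); [lia|auto].
      assert (HvL' : In v L'). { apply nodup_In. apply (ball_le nb v 0); [lia|]. simpl; auto. }
      rewrite green_sym by auto. rewrite (green_row adj nb X v K L' (gK nb X v K) Hg (NoDup_nodup _ _)).
      rewrite (ind_sum_bound nb X v K L' (gK nb X v K) (NoDup_nodup _ _) HvL' HXv (gK_nonneg nb X v K)).
      pose proof (ind_err_nonneg nb X v K L' (gK nb X v K) (gK_nonneg nb X v K)).
      assert (gK nb X v K v <= M) by apply HM.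
      assert (gK nb X v K v * d <= M * d) by (apply Rmult_le_compat_r; lra). fold d. lra.
      intros x Hx Hnz. apply (supp_incl adj nb X v K (N + K) x Hg Hs); auto; lia. }
    pose proof (D_amgm adj X L g' (gK nb X v K) (d / d') ltac:(apply Rdiv_lt_0_compat; auto)) as Hq.
    rewrite Ea in Hq.
    assert (E1 : d / d' / 2 * Dform adj X L g' g' <= d / d' / 2 * (2 * (G * d'))).
    { apply Rmult_le_compat_l; auto. apply Rlt_le. apply Rdiv_lt_0_compat; [apply Rdiv_lt_0_compat|]; lra. }
    assert (E2 : / (2 * (d / d')) * Dform adj X L (gK nb X v K) (gK nb X v K) <= / (2 * (d / d')) * (2 * (M * d))).
    { apply Rmult_le_compat_l; auto. apply Rlt_le, Rinv_0_lt_compat. apply Rmult_lt_0_compat; [lra|apply Rdiv_lt_0_compat; auto]. }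
    assert (E3 : d / d' / 2 * (2 * (G * d')) = d * G) by (field; lra).
    assert (E4 : / (2 * (d / d')) * (2 * (M * d)) = d' * M) by (field; lra).
    lra. }
  destruct (list_bound L (fun T x => sum_f_R0 (fun K => ind X (fun x => g' x * dg nb X x * srw_p nb X (S K) x v) x) T)) as [C HC].
  { intros x _. unfold ind. destruct excluded_middle_informative as [Hx|Hx].
    - destruct (Bx adj nb X v x M Hg Hs Hx HM) as [B HB]. exists (g' x * dg nb X x * B). intros T.
      rewrite (sum_scal_l (fun K => srw_p nb X (S K) x v) (g' x * dg nb X x) T). apply Rmult_le_compat_l. apply Rmult_le_pos; auto. unfold dg; apply pos_INR. auto.
    - exists 0. intros T. apply Req_le. clear. induction T; cbn [sum_f_R0]; lra. }
  destruct (Rle_dec (d * G / 2 - d' * M / 2) 0) as [Hle|Hgt].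
  - apply Rmult_le_reg_l with d; auto. field_simplify; lra.
  - exfalso. apply Rnot_le_lt in Hgt.
    destruct (INR_archimed _ C Hgt) as [n Hn].
    assert (Hs1 : sum_f_R0 (fun _ => d * G / 2 - d' * M / 2) n <= sum_f_R0 err n).
    { apply sum_Rle; intros; apply Hc. }
    rewrite sum_cte in Hs1.
    assert (sum_f_R0 err n <= C).
    { specialize (HC n). rewrite <- sum_f_sumL in HC. exact HC. }
    rewrite S_INR in Hs1. lra. Qed.

Theorem corollary3p13 (V : Type) (adj : V -> V -> Prop) (nb : V -> list V)
    (c : V -> R * R) (r : V -> R) (A : R * R -> Prop) :
  graph_nb adj nb -> simple_graph adj -> three_connected adj ->
  transient_sub nb (fun _ => True) -> bounded_degree nb ->
  packed_in_H2 adj nb c r -> locally_finite_dual adj nb c ->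
  closed_proper_bdy A ->
  ((exists O : point V -> Prop, dm_open adj c r O /\ bdy_sub A O /\
      forall U : point V -> Prop, dm_open adj c r U -> bdy_sub A U ->
        (forall x, U x -> O x) -> transient_sub nb (minus_set U))
   <->
   (exists U : point V -> Prop, dm_open adj c r U /\ bdy_sub A U /\
      transient_sub nb (minus_set U))).
Proof.
  intros Hg Hs _ _ _ _ _ _. split.
  - intros [O [HO [HA HT]]]. exists O. split; [exact HO|]. split; [exact HA|]. apply HT; auto.
  - intros [U [HU [HA [v Hv]]]]. exists U. split; [exact HU|]. split; [exact HA|].
    intros U' HU' HA' Hsub. exists v. apply (mono_at adj nb (minus_set U) (minus_set U') v Hg Hs); auto.
    intros x Hx HU'x. apply Hx. apply Hsub; auto.
Qed.
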